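(* Let $m,n\ge 2$ and let $\mathcal{C}$ be a Cauchy tensor of order $m$ and dimension $n$ with generating vector $c\in\mathbb{R}^n$ all of whose entries are nonnegative. Then every H-eigenvalue of $\mathcal{C}$ is nonnegative.
   Context: The Cauchy tensor with generating vector $c=(c_1,\dots,c_n)^T$ (with $c_{i_1}+\cdots+c_{i_m}\neq0$ for all indices) is $\mathcal{C}=(c_{i_1\cdots i_m})$, $c_{i_1\cdots i_m}=\frac{1}{c_{i_1}+\cdots+c_{i_m}}$, $i_j\in\{1,\dots,n\}$; it is symmetric. For $x\in\mathbb{R}^n$, $\mathcal{C}x^{m-1}\in\mathbb{R}^n$ has $i$-th component $\sum_{i_2,\dots,i_m}c_{ii_2\cdots i_m}x_{i_2}\cdots x_{i_m}$. A real number $\lambda$ is an H-eigenvalue of $\mathcal{C}$ if there is $x\in\mathbb{R}^n\setminus\{0\}$ with $\mathcal{C}x^{m-1}=\lambda x^{[m-1]}$, where $x^{[m-1]}=(x_1^{m-1},\dots,x_n^{m-1})^T$. *)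

(* Defs.v *)
From HB Require Import structures.
From mathcomp Require Import all_boot all_order all_algebra.
Set Implicit Arguments. Unset Strict Implicit. Unset Printing Implicit Defensive.
Import Order.TTheory GRing.Theory Num.Theory.
Local Open Scope ring_scope.

(* A tensor of order m and dimension n is given by its entries
   A (i_1 :: ... :: i_m); it is only ever evaluated on index lists of length m. *)

Definition cauchy_tensor (R : fieldType) (n : nat) (c : 'I_n -> R)
  (s : seq 'I_n) : R := (\sum_(j <- s) c j)^-1.

Definition tensor_apply (R : nzRingType) (m n : nat) (A : seq 'I_n -> R)
  (x : 'cV[R]_n) (i : 'I_n) : R :=
  \sum_(t : (m.-1).-tuple 'I_n) A (i :: tval t) * \prod_(j <- tval t) x j 0.

Definition H_eigenvalue (R : nzRingType) (m n : nat) (A : seq 'I_n -> R)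
  (lam : R) : Prop :=
  exists x : 'cV[R]_n, x != 0 /\
    forall i : 'I_n, tensor_apply m A x i = lam * (x i 0) ^+ (m.-1).

(* Main.v *)
Require Import Defs.
From HB Require Import structures.
From mathcomp Require Import all_boot all_order all_algebra.
From mathcomp Require Import ring lra.
Import Order.TTheory GRing.Theory Num.Theory.
Local Open Scope ring_scope.

Section Aux.
Variable R : realFieldType.

Definition QF (l : seq (R * R)) : R :=
  \sum_(p <- l) \sum_(q <- l) p.2 * q.2 / (p.1 + q.1).

Lemma cauchy_psd : forall l, all (fun p : R * R => 0 < p.1) l -> 0 <= QF l.
Proof.
move=> l; move: {2}(size l) (leqnn (size l)) => k.
elim: k l => [|k IH] [|[a w] l] //= Hs Hall; rewrite ?/QF ?big_nil //.
move/andP: Hall => [ha Hl].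
set S := \sum_(q <- l) q.2 / (a + q.1).
set f := fun q : R * R => (q.1, q.2 * (q.1 - a) / (q.1 + a)).
have key : QF ((a, w) :: l) = (w + 2 * a * S) ^+ 2 / (2 * a) + QF (map f l).
  rewrite /QF; under eq_bigr => p _ do rewrite big_cons. rewrite big_cons /= big_map.
  have E : forall p q, p \in l -> q \in l ->
     (f p).2 * (f q).2 / ((f p).1 + (f q).1) =
     p.2 * q.2 / (p.1 + q.1) - (2 * a * (p.2 / (a + p.1))) * (q.2 / (a + q.1)).
    move=> p q Hp Hq; have hp := allP Hl p Hp; have hq := allP Hl q Hq.
    rewrite /f /=. field.
    by rewrite !gt_eqF //; lra.
  have -> : \sum_(j <- l) \sum_(q <- map f l) (f j).2 * q.2 / ((f j).1 + q.1)
     = \sum_(j <- l) \sum_(q <- l) (j.2 * q.2 / (j.1 + q.1)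
           - (2 * a * (j.2 / (a + j.1))) * (q.2 / (a + q.1))).
    apply: eq_big_seq => p Hp; rewrite big_map; apply: eq_big_seq => q Hq; exact: E.
  rewrite big_split /=.
  under [X in _ = _ + X]eq_bigr do rewrite sumrB.
  rewrite sumrB -big_distrlr /= -mulr_sumr.
  have HS1 : \sum_(j <- l) w * j.2 / (a + j.1) = w * S.
    by rewrite /S mulr_sumr; apply: eq_bigr => j _; rewrite mulrA.
  have HS2 : \sum_(j <- l) j.2 * w / (j.1 + a) = w * S.
    by rewrite /S mulr_sumr; apply: eq_bigr => j _; rewrite (addrC j.1) mulrAC mulrC.
  rewrite HS1 HS2 -/S.
  set T := \sum_(j <- l) \sum_(q <- l) _.
  field.
  by rewrite !gt_eqF //; lra.
change (0 <= QF ((a, w) :: l)); rewrite key; apply: addr_ge0.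
  by apply: divr_ge0; [exact: sqr_ge0 | lra].
apply: IH; first by rewrite size_map.
rewrite all_map; apply/allP => q Hq /=; exact: (allP Hl q Hq).
Qed.

Lemma sum_tuple_cons (n k : nat) (F : seq 'I_n -> R) :
  \sum_(t : k.+1.-tuple 'I_n) F t = \sum_(i : 'I_n) \sum_(t : k.-tuple 'I_n) F (i :: t).
Proof.
rewrite pair_big /=.
rewrite (reindex (fun p : 'I_n * k.-tuple 'I_n => [tuple of p.1 :: p.2])) /=.
  by apply: eq_bigr.
exists (fun t : k.+1.-tuple 'I_n => (thead t, [tuple of behead t])).
  move=> [i t] _ /=; rewrite theadE; congr pair; exact: val_inj.
by move=> t _ /=; rewrite -tuple_eta.
Qed.

Lemma sum_tuple_cat (n a b : nat) (F : seq 'I_n -> R) :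
  \sum_(t : (a + b).-tuple 'I_n) F t =
  \sum_(s : a.-tuple 'I_n) \sum_(u : b.-tuple 'I_n) F (s ++ u).
Proof.
elim: a F => [|a IH] F.
  rewrite (big_pred1 [tuple]) //= => s; apply/esym/eqP; exact: tuple0.
transitivity (\sum_(t : (a + b).+1.-tuple 'I_n) F t); first by [].
rewrite sum_tuple_cons (sum_tuple_cons n a (fun s => \sum_(u : b.-tuple 'I_n) F (s ++ u))); apply: eq_bigr => i _.
exact: (IH (fun s => F (i :: s))).
Qed.

Lemma keypos (n h : nat) (d : R) (c x : 'I_n -> R) :
  (0 < h)%N -> 0 <= d -> (forall j, 0 < c j) ->
  0 <= \sum_(t : (h + h).-tuple 'I_n)
          (d + \sum_(j <- t) c j)^-1 * \prod_(j <- t) x j.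
Proof.
case: h => // h _ hd hc.
have E := sum_tuple_cat n h.+1 h.+1 (fun t => (d + \sum_(j <- t) c j)^-1 * \prod_(j <- t) x j).
rewrite /= in E; rewrite E.
set l := map (fun s : h.+1.-tuple 'I_n => (d / 2 + \sum_(j <- s) c j, \prod_(j <- s) x j))
           (enum {: h.+1.-tuple 'I_n}).
have -> : \sum_(s : h.+1.-tuple 'I_n) \sum_(u : h.+1.-tuple 'I_n)
     (d + \sum_(j <- s ++ u) c j)^-1 * \prod_(j <- s ++ u) x j = QF l.
  rewrite /QF /l big_map big_enum /=; apply: eq_bigr => s _.
  rewrite big_map big_enum /=; apply: eq_bigr => u _.
  rewrite !big_cat /= addrACA -splitr mulrC.
  done.
apply: cauchy_psd; rewrite /l all_map; apply/allP => s _ /=.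
rewrite [s]tuple_eta /= big_cons.
have := hc (thead s).
have : 0 <= \sum_(j <- behead s) c j by apply: sumr_ge0 => j _; exact: ltW.
lra.
Qed.

End Aux.

Lemma hpow (R : realFieldType) (y : R) (k : nat) : y ^+ (k + k) = (y ^+ k) ^+ 2.
Proof. by rewrite -exprM muln2 addnn. Qed.

Theorem theorem3p3 (R : realFieldType) (m n : nat) (c : 'I_n -> R)
  (hm : (2 <= m)%N) (hn : (2 <= n)%N)
  (hc_nonzero : forall s : m.-tuple 'I_n, \sum_(j <- tval s) c j != 0)
  (hc_nonneg : forall i : 'I_n, 0 <= c i) :
  forall lam : R, H_eigenvalue m (cauchy_tensor c) lam -> 0 <= lam.
Proof.
move=> lam [x [hx0 heig]].
have cpos : forall j, 0 < c j.
  move=> j; rewrite lt_def hc_nonneg andbT.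
  apply/negP => /eqP cj0; have := hc_nonzero (nseq_tuple m j).
  rewrite big1_seq ?eqxx // => k /andP[_ Hk]; move: Hk; rewrite mem_nseq.
  by case/andP => _ /eqP ->.
have [i xi] : exists i, x i 0 != 0.
  case: (pickP (fun i => x i 0 != 0)) => [i Hi|H]; first by exists i.
  exfalso; move/negP: hx0; apply; apply/eqP/matrixP => i j.
  rewrite (ord1 j) !mxE; move: (H i) => /= /negbFE /eqP.
  done.
have pos2 : forall h, 0 < x i 0 ^+ h ^+ 2.
  by move=> h; rewrite lt_def sqr_ge0 andbT !expf_neq0.
case/boolP: (odd m) => hodd.
  have [h Hm] : exists h, m = (h + h)%N.+1.
    by exists m./2; rewrite -{1}(odd_double_half m) hodd addnn.
  subst m.
  have hh : (0 < h)%N by case: h hm heig hc_nonzero hodd.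
  have K := keypos R n h (c i) c (fun j => x j 0) hh (hc_nonneg i) cpos.
  have := heig i; rewrite /tensor_apply /=.
  have -> : \sum_(t : ((h + h)%N).-tuple 'I_n) cauchy_tensor c (i :: t) * \prod_(j <- t) x j 0
    = \sum_(t : ((h + h)%N).-tuple 'I_n) (c i + \sum_(j <- t) c j)^-1 * \prod_(j <- t) x j 0.
    by apply: eq_bigr => t _; rewrite /cauchy_tensor big_cons.
  move=> E; move: K; rewrite E hpow; have := pos2 h.
  by move=> P; rewrite pmulr_lge0.
have [h Hm] : exists h, m = (h + h)%N.
  by exists m./2; rewrite addnn -{1}(odd_double_half m) (negbTE hodd).
subst m; clear hc_nonzero.
case: h hm heig hodd => // h' _ heig _.
have K := keypos R n h'.+1 0 c (fun j => x j 0) isT (lexx 0) cpos.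
have K2 : (0 <= \sum_(t : (S (addn h' h'.+1)).-tuple 'I_n)
   (0 + \sum_(j <- t) c j)^-1 * \prod_(j <- t) x j 0) := K.
have E2 := sum_tuple_cons R n (h' + h'.+1)%N
   (fun t => (0 + \sum_(j <- t) c j)^-1 * \prod_(j <- t) x j 0).
rewrite /= in E2; rewrite E2 in K.
have S1 : \sum_(i : 'I_n) x i 0 * tensor_apply (h'.+1 + h'.+1)%N (cauchy_tensor c) x i
    = lam * \sum_(i : 'I_n) x i 0 ^+ (h'.+1 + h'.+1)%N.
  rewrite mulr_sumr; apply: eq_bigr => k _; rewrite heig mulrCA -exprS //.
have S2 : \sum_(i : 'I_n) x i 0 * tensor_apply (h'.+1 + h'.+1)%N (cauchy_tensor c) x i
    = \sum_(i : 'I_n) \sum_(t : ((h' + h'.+1)%N).-tuple 'I_n)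
        (0 + \sum_(j <- i :: t) c j)^-1 * \prod_(j <- i :: t) x j 0.
  apply: eq_bigr => k _; rewrite /tensor_apply mulr_sumr; apply: eq_bigr => t _.
  by rewrite /cauchy_tensor add0r [in RHS]big_cons mulrCA.
have P : 0 < \sum_(i : 'I_n) x i 0 ^+ (h'.+1 + h'.+1)%N.
  rewrite (bigD1 i) //= hpow; have := pos2 h'.+1.
  have : 0 <= \sum_(k < n | k != i) x k 0 ^+ (h'.+1 + h'.+1)%N.
    by apply: sumr_ge0 => k _; rewrite hpow sqr_ge0.
  lra.
move: K; rewrite -S2 S1.
by rewrite pmulr_lge0.
Qed.
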